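(* Every symmetric adversary $\mathcal A\subseteq 2^\Pi$ is fair, i.e. for all $P\subseteq\Pi$ and $Q\subseteq P$, $\mathit{setcon}(\mathcal A|_{P,Q})=\min(|Q|,\mathit{setcon}(\mathcal A|_P))$.
   Context: An adversary is a set $\mathcal A\subseteq 2^\Pi$ of subsets (live sets) of the process set $\Pi=\{p_1,\dots,p_n\}$. It is symmetric if for all $S\in\mathcal A$ and all $S'\subseteq\Pi$ with $|S'|=|S|$, $S'\in\mathcal A$. $\mathcal A|_P=\{S\in\mathcal A: S\subseteq P\}$ and $\mathcal A|_{P,Q}=\{S\in\mathcal A|_P: S\cap Q\neq\emptyset\}$. The set consensus power is defined recursively by $\mathit{setcon}(\emptyset)=0$ and, for $\mathcal A\ne\emptyset$, $\mathit{setcon}(\mathcal A)=\max_{S\in\mathcal A}\min_{a\in S}\mathit{setcon}(\mathcal A|_{S\setminus\{a\}})+1$. $\mathcal A$ is fair if for all $P\subseteq\Pi$ and $Q\subseteq P$, $\mathit{setcon}(\mathcal A|_{P,Q})=\min(|Q|,\mathit{setcon}(\mathcal A|_P))$. *)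

(* Defs.v *)
From mathcomp Require Import all_boot.
Set Implicit Arguments. Unset Strict Implicit. Unset Printing Implicit Defensive.

(* Processes Pi = 'I_n; an adversary is a set of live sets. *)
Definition adversary (n : nat) := {set {set 'I_n}}.

Definition restr n (A : adversary n) (P : {set 'I_n}) : adversary n :=
  [set S in A | S \subset P].

Definition restr2 n (A : adversary n) (P Q : {set 'I_n}) : adversary n :=
  [set S in restr A P | S :&: Q != set0].

Definition symmetric_adv n (A : adversary n) : Prop :=
  forall S S' : {set 'I_n}, S \in A -> #|S'| = #|S| -> S' \in A.

(* setcon with fuel; with fuel > size of every live set, it computes
   setcon(A) = max_{S in A} min_{a in S} setcon(A|_{S\{a}}) + 1,
   setcon(empty) = 0. *)
Fixpoint setcon_fuel n (k : nat) (A : adversary n) : nat :=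
  match k with
  | 0 => 0
  | k'.+1 =>
      if A == set0 then 0 else
      \max_(S in A) (\big[minn/n.+1]_(a in S) setcon_fuel k' (restr A (S :\ a))).+1
  end.

Definition setcon n (A : adversary n) : nat := setcon_fuel n.+2 A.

Definition fair n (A : adversary n) : Prop :=
  forall P Q : {set 'I_n}, Q \subset P ->
    setcon (restr2 A P Q) = minn #|Q| (setcon (restr A P)).

Lemma setcon_empty n : setcon (set0 : adversary n) = 0.
Proof. by rewrite /setcon /= eqxx. Qed.

(* Main.v *)
Require Import Defs.
From mathcomp Require Import all_boot.
From mathcomp Require Import zify.
Set Implicit Arguments. Unset Strict Implicit.

Section S.
Variable n : nat.
Implicit Types (A B : adversary n) (X Y P Q S : {set 'I_n}).

Lemma card_del S a : a \in S -> #|S :\ a| = #|S|.-1.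
Proof. by move=> aS; rewrite (cardsD1 a S) aS. Qed.

Lemma fuel_stable k B : (forall S, S \in B -> #|S| < k) ->
  forall k', k <= k' -> setcon_fuel k' B = setcon_fuel k B.
Proof.
elim: k B => [|k IH] B hB k' hk'.
  have -> : B = set0.
    by apply/setP => S; rewrite inE; apply/negbTE/negP => /hB.
  by case: k' {hk'} => //= k''; rewrite eqxx.
case: k' hk' => // k' hk' /=.
case: (B == set0) => //.
apply: eq_bigr => S SB; congr _.+1; apply: eq_bigr => a aS; apply: IH => //.
move=> T; rewrite inE => /andP[_ TS].
have := subset_leq_card TS; rewrite card_del // => h.
have := hB S SB; have : 0 < #|S| by apply/card_gt0P; exists a.
lia.
Qed.

Lemma setcon_eq B : setcon B = if B == set0 then 0 else
  \max_(S in B) (\big[minn/n.+1]_(a in S) setcon (restr B (S :\ a))).+1.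
Proof.
rewrite /setcon.
have -> : setcon_fuel n.+2 B = if B == set0 then 0 else
  \max_(S in B) (\big[minn/n.+1]_(a in S) setcon_fuel n.+1 (restr B (S :\ a))).+1 by [].
case: (B == set0) => //.
apply: eq_bigr => S _; congr _.+1; apply: eq_bigr => a _.
symmetry; apply: fuel_stable => // T _.
by have := max_card T; rewrite card_ord.
Qed.

Lemma restr_restr A P X : X \subset P -> restr (restr A P) X = restr A X.
Proof.
move=> XP; apply/setP => S; rewrite !inE.
case SX: (S \subset X); rewrite ?andbF // (subset_trans SX XP).
by rewrite !andbT.
Qed.

Lemma restr_restr2 A P Q X : X \subset P -> restr (restr2 A P Q) X = restr2 A X Q.
Proof.
move=> XP; apply/setP => S; rewrite !inE.
case SX: (S \subset X); rewrite ?andbF // (subset_trans SX XP).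
by rewrite !andbT.
Qed.

Lemma bigmin_le (S : {set 'I_n}) F a0 x : a0 \in S ->
  \big[minn/x]_(a in S) F a <= F a0.
Proof.
move=> h; rewrite -big_filter.
have : a0 \in [seq i <- index_enum 'I_n | i \in S] by rewrite mem_filter h mem_index_enum.
elim: [seq _ <- _ | _] => // b r IH; rewrite big_cons inE => /orP[/eqP<-|/IH].
  exact: geq_minl.
by move=> hr; rewrite geq_min hr orbT.
Qed.

Lemma le_bigmin (S : {set 'I_n}) F m x : m <= x -> (forall a, a \in S -> m <= F a) ->
  m <= \big[minn/x]_(a in S) F a.
Proof.
move=> hx hF; elim/big_ind: _ => //.
  by move=> u v hu hv; rewrite leq_min hu hv.
Qed.

Lemma exists_sub X m : m <= #|X| -> exists2 Y : {set 'I_n}, Y \subset X & #|Y| = m.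
Proof.
elim: m => [|m IH] h; first by exists (set0 : {set 'I_n}); rewrite ?sub0set ?cards0.
have [Y YX cY] := IH (ltnW h).
have : 0 < #|X :\: Y| by rewrite cardsDS // cY; lia.
case/card_gt0P => x; rewrite inE => /andP[xY xX].
exists (x |: Y); first by rewrite subUset sub1set xX.
by rewrite cardsU1 (negbTE xY) cY.
Qed.


Variable A : adversary n.
Hypothesis A0 : set0 \notin A.
Hypothesis As : symmetric_adv A.

Let h X := setcon (restr A X).

Lemma nonempty_of S : S \in A -> exists a, a \in S.
Proof.
move=> SA; apply/set0Pn; apply: contraNneq A0 => e; by rewrite -e.
Qed.

Lemma h_le m X : #|X| < m -> h X <= #|X|.
Proof.
elim: m X => // m IH X hX; rewrite /h setcon_eq; case: ifP => // _.
apply/bigmax_leqP => S; rewrite inE => /andP[SA SX].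
have [a0 aS] := nonempty_of SA.
have S'X : S :\ a0 \subset X := subset_trans (subD1set S a0) SX.
apply: leq_trans (_ : (h (S :\ a0)).+1 <= _).
  by rewrite ltnS; apply: leq_trans (bigmin_le _ _ aS) _; rewrite restr_restr.
have := subset_leq_card SX; have := card_del aS.
have : 0 < #|S| by apply/card_gt0P; exists a0.
have := IH (S :\ a0).
move=> H1 H2 H3 H4; have := H1 ltac:(lia); lia.
Qed.

Lemma h_sym m X Y : #|X| < m -> #|Y| = #|X| -> h X <= h Y.
Proof.
elim: m X Y => // m IH X Y hX hY; rewrite {1}/h setcon_eq; case: ifP => // _.
apply/bigmax_leqP => S; rewrite inE => /andP[SA SX].
have [a0 aS] := nonempty_of SA.
have cS := subset_leq_card SX.
have [S' S'Y cS'] := exists_sub (m := #|S|) (X := Y) ltac:(lia).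
have S'A : S' \in A by apply: As SA cS'.
have [b0 bS'] := nonempty_of S'A.
rewrite /h setcon_eq; case: ifP => [/eqP e|_].
  by have := in_set0 S'; rewrite -e inE S'A S'Y.
apply: leq_trans (leq_bigmax_cond S' _); last by rewrite inE S'A S'Y.
rewrite ltnS; apply: leq_trans (bigmin_le _ _ aS) _.
rewrite restr_restr ?(subset_trans (subD1set S a0) SX) //.
have hS : 0 < #|S| by apply/card_gt0P; exists a0.
apply: le_bigmin.
  have := h_le (m := #|S :\ a0|.+1) (X := S :\ a0) (ltnSn _).
  rewrite /h => H; apply: leq_trans H _.
  have := max_card (S :\ a0); rewrite card_ord; lia.
move=> b bS; rewrite restr_restr ?(subset_trans (subD1set S' b) S'Y) //.
apply: IH; rewrite !card_del //; lia.
Qed.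

Lemma h_eq X Y : #|Y| = #|X| -> h X = h Y.
Proof.
move=> e; apply/eqP; rewrite eqn_leq (h_sym (m := #|X|.+1)) //.
by rewrite (h_sym (m := #|Y|.+1)).
Qed.


Lemma bigmin_idx (S : {set 'I_n}) F x : \big[minn/x]_(a in S) F a <= x.
Proof.
rewrite -big_filter; elim: [seq _ <- _ | _] => [|b r IH]; first by rewrite big_nil.
by rewrite big_cons geq_min IH orbT.
Qed.

Lemma main m P Q : #|P| < m -> setcon (restr2 A P Q) = minn #|Q :&: P| (h P).
Proof.
elim: m P Q => // m IH P Q hP.
have cardn : forall Z : {set 'I_n}, #|Z| <= n.
  by move=> Z; have := max_card Z; rewrite card_ord.
have E : forall S a, S \subset P -> a \in S ->
    setcon (restr (restr2 A P Q) (S :\ a)) = minn #|Q :&: (S :\ a)| (h (S :\ a)).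
  move=> S a SP aS; rewrite restr_restr2 ?(subset_trans (subD1set S a) SP) // IH //.
  have := subset_leq_card SP; have := card_del aS.
  have : 0 < #|S| by apply/card_gt0P; exists a.
  lia.
apply/eqP; rewrite eqn_leq; apply/andP; split.
  rewrite setcon_eq; case: ifP => // _.
  apply/bigmax_leqP => S; rewrite !inE => /andP[/andP[SA SP] SQ].
  rewrite leq_min; apply/andP; split.
    have [a] := set0Pn _ SQ; rewrite !inE => /andP[aS aQ].
    apply: leq_trans (_ : (#|Q :&: (S :\ a)|).+1 <= _).
      by rewrite ltnS; apply: leq_trans (bigmin_le _ _ aS) _; rewrite E // geq_minl.
    have aQP : a \in Q :&: P by rewrite inE aQ (subsetP SP).
    rewrite (cardsD1 a (Q :&: P)) aQP add1n ltnS; apply: subset_leq_card.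
    apply/subsetP => x; rewrite !inE => /andP[xQ /andP[xa xS]].
    by rewrite xa xQ (subsetP SP x xS).
  rewrite /h (setcon_eq (restr A P)); case: ifP => [/eqP e|_].
    by have := in_set0 S; rewrite -e !inE SA SP.
  apply: leq_trans (leq_bigmax_cond S _) ; last by rewrite inE SA SP.
  rewrite ltnS; apply: le_bigmin; first exact: bigmin_idx.
  move=> b bS; apply: leq_trans (bigmin_le _ _ bS) _.
  by rewrite E // restr_restr ?(subset_trans (subD1set S b) SP) // geq_minr.
case: (boolP (Q :&: P == set0)) => [/eqP->|QP0]; first by rewrite cards0 min0n.
rewrite /h (setcon_eq (restr A P)); case: ifP => [_|RP]; first by rewrite minn0.
have [S1 S1R] := set0Pn _ (negbT RP).
rewrite (bigmax_eq_arg S1) //.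
case: arg_maxnP => // S0; rewrite inE => /andP[S0A S0P] _.
rewrite (eq_bigr (fun a => h (S0 :\ a))); last first.
  by move=> a _; rewrite restr_restr ?(subset_trans (subD1set S0 a) S0P).
have [a0 aS0] := nonempty_of S0A.
have mnle : \big[minn/n.+1]_(i in S0) h (S0 :\ i) <= h (S0 :\ a0) by apply: bigmin_le.
move: (\big[minn/n.+1]_(i in S0) h (S0 :\ i)) mnle => mn mnle.
have hk := h_le (ltnSn #|S0 :\ a0|).
have k0 := card_del aS0.
have kpos : 0 < #|S0| by apply/card_gt0P; exists a0.
have kP := subset_leq_card S0P.
move Ek: (#|S0|) k0 kpos kP => k k0 kpos kP.
rewrite k0 in hk.
have qpos : 0 < #|Q :&: P| by rewrite card_gt0.
have qP : #|Q :&: P| + #|P :\: Q| = #|P| by rewrite setIC cardsID.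
have qn := cardn (Q :&: P).
move Eq: (#|Q :&: P|) qpos qP qn => q qpos qP qn.
have [T TQP cT] := exists_sub (X := Q :&: P) (m := minn k q) ltac:(rewrite Eq; exact: geq_minr).
have [U UPQ cU] := exists_sub (X := P :\: Q) (m := k - minn k q) ltac:(lia).
have TQ : forall x, x \in T -> x \in Q.
  by move=> x /(subsetP TQP); rewrite inE => /andP[].
have TP : forall x, x \in T -> x \in P.
  by move=> x /(subsetP TQP); rewrite inE => /andP[].
have UQ : forall x, x \in U -> x \notin Q.
  by move=> x /(subsetP UPQ); rewrite inE => /andP[].
have UP : forall x, x \in U -> x \in P.
  by move=> x /(subsetP UPQ); rewrite inE => /andP[].
have QS : Q :&: (T :|: U) = T.
  apply/setP => x; rewrite !inE.
  case xT: (x \in T); first by rewrite (TQ _ xT).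
  by case xU: (x \in U); rewrite ?andbF // (negbTE (UQ _ xU)).
have TU : T :&: U = set0.
  apply/setP => x; rewrite !inE.
  case xT: (x \in T) => //=; apply/negP => /UQ; by rewrite (TQ _ xT).
have cS : #|T :|: U| = k by rewrite cardsU TU cards0 cT cU subn0 subnKC // geq_minl.
have SA : T :|: U \in A by apply: As S0A _; rewrite cS.
have SP : T :|: U \subset P.
  by apply/subsetP => x; rewrite inE => /orP[/TP|/UP].
have SR : T :|: U \in restr2 A P Q.
  by rewrite !inE SA SP /= setIC QS -card_gt0 cT leq_min kpos qpos.
rewrite setcon_eq; case: ifP => [/eqP e|_].
  by have := in_set0 (T :|: U); rewrite -e SR.
apply: leq_trans (leq_bigmax_cond (T :|: U) SR).
apply: leq_trans (leqSpred _) _; rewrite ltnS.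
apply: le_bigmin.
  by apply: leq_trans (leq_pred _) _; apply: leq_trans (geq_minl _ _) _; apply: leq_trans qn _.
move=> b bS; rewrite E // leq_min; apply/andP; split.
  rewrite setIDA QS.
  have := cardsD1 b T; move: cT mnle hk kpos; move: (h (S0 :\ a0)) (#|T|) (#|T :\ b|) => x y z.
  clear; case: (b \in T) => /=; lia.
rewrite -(h_eq (X := S0 :\ a0)).
  apply: leq_trans _ mnle; have := geq_minr q mn.+1; move: (minn q mn.+1) => x.
  clear; lia.
by rewrite (card_del bS) (card_del aS0) cS Ek.
Qed.

End S.

Theorem theorem6 (n : nat) (A : adversary n) :
  set0 \notin A -> symmetric_adv A -> fair A.
Proof.
move=> A0 As P Q QP.
by rewrite (main A0 As Q (ltnSn #|P|)) (setIidPl QP).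
Qed.
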